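(* In the setting and construction described in the context, for every $i=1,2,\dots,t-2$ we have $|S_{i+1}|\leq |S_i|\,(1+R(4,R(4,s)))$. (More precisely, $|X_i^j|\le R(4,R(4,s))$ for every $j$.)
   Context: All graphs are finite and simple. $P_t$ is the path on $t$ vertices; $K_4$ is the complete graph on $4$ vertices; $SDK_s$ is the one-subdivision of $K_{1,s}$ (replace each edge $uv$ of the star $K_{1,s}$ by a path $u w v$ through a new vertex $w$). A graph is $\mathcal{H}$-free if it has no induced subgraph isomorphic to a member of $\mathcal{H}$. $R(k,l)$ denotes the Ramsey number: the least integer such that every graph on at least $R(k,l)$ vertices contains a clique on $k$ vertices or a stable set on $l$ vertices. For $X\subseteq V$, $N(X)=\bigcup_{v\in X}N(v)$. Setting: $s,t$ are positive integers with $t\ge 2$, and $G=(V,E)$ is a connected $(P_t,SDK_s,K_4)$-free graph. Fix a vertex $a\in V$, let $d(v)$ be the distance from $v$ to $a$, and set $S_1=\{a\}$. For $i=1,2,\dots,t-2$ define $S_{i+1}$ as follows: let $B_i=N(S_i)$ and $W_i=V\setminus(B_i\cup S_i)$; enumerate $S_i=\{v_1,\dots,v_{|S_i|}\}$ and for $j=1,\dots,|S_i|$ let $B_i^j=\{v\in B_i\setminus\bigcup_{k<j}B_i^k : v\text{ is adjacent to }v_j\}$ (so $B_i=\bigcup_j B_i^j$); for each $j$ let $X_i^j\subseteq B_i^j$ be an inclusion-minimal set such that every $w\in W_i$ with $N(w)\cap B_i^j\neq\emptyset$ satisfies $N(w)\cap X_i^j\ne\emptyset$; let $X_i=\bigcup_j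 X_i^j$ and $S_{i+1}=S_i\cup X_i$. The choices of enumeration and of minimal sets are arbitrary. *)

(* Defs.v *)
(* Simple graphs as symmetric irreflexive relations on a finType. *)
From mathcomp Require Import all_boot.
Set Implicit Arguments. Unset Strict Implicit. Unset Printing Implicit Defensive.

Section Defs.

Definition contains_induced (U : finType) (f : rel U) (T : finType) (e : rel T) : Prop :=
  exists g : U -> T, injective g /\ forall x y, f x y = e (g x) (g y).

Definition path_rel (t : nat) : rel 'I_t :=
  fun i j => (i.+1 == j :> nat) || (j.+1 == i :> nat).

Definition complete_rel (n : nat) : rel 'I_n := fun i j => i != j.

(* SDK_s, the one-subdivision of K_{1,s}: None is the centre u,
   Some (k,false) is the subdivision vertex w_k, Some (k,true) the leaf v_k;
   edges u - w_k - v_k. *)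
Definition sdk_rel (s : nat) : rel (option ('I_s * bool)) :=
  fun x y =>
    match x, y with
    | None, Some (_, false) => true
    | Some (_, false), None => true
    | Some (k, false), Some (l, true) => k == l
    | Some (k, true), Some (l, false) => k == l
    | _, _ => false
    end.

Definition is_clique (U : finType) (f : rel U) (A : {set U}) : Prop :=
  forall x y, x \in A -> y \in A -> x != y -> f x y.
Definition is_stable (U : finType) (f : rel U) (A : {set U}) : Prop :=
  forall x y, x \in A -> y \in A -> ~~ f x y.

Definition ramsey_prop (k l n : nat) : Prop :=
  forall (U : finType) (f : rel U), symmetric f -> irreflexive f -> n <= #|U| ->
    (exists A : {set U}, #|A| = k /\ is_clique f A) \/
    (exists A : {set U}, #|A| = l /\ is_stable f A).

Definition is_ramsey_number (k l r : nat) : Prop :=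
  ramsey_prop k l r /\ forall n, ramsey_prop k l n -> r <= n.

Variables (T : finType) (e : rel T).

Definition nbhd (A : {set T}) : {set T} := [set v | [exists u in A, e u v]].

(* B^1, B^2, ... for the enumeration vs = [v_1; v_2; ...] of S:
   B^j = { v in B \ (B^1 u ... u B^{j-1}) : v adjacent to v_j } *)
Fixpoint Bparts (B : {set T}) (vs : seq T) : seq {set T} :=
  match vs with
  | [::] => [::]
  | v :: vs' => let Bv := [set u in B | e v u] in Bv :: Bparts (B :\: Bv) vs'
  end.

Definition covers (W Bj X : {set T}) : Prop :=
  forall w, w \in W -> [exists u in Bj, e w u] -> [exists u in X, e w u].

Definition minimal_cover (W Bj X : {set T}) : Prop :=
  X \subset Bj /\ covers W Bj X /\ forall Y : {set T}, Y \proper X -> ~ covers W Bj Y.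

(* one step S_i -> S_{i+1} with enumeration vs of S_i and sets X j = X_i^{j+1}
   (j is 0-indexed) *)
Definition valid_step (S : {set T}) (vs : seq T) (X : nat -> {set T}) (S' : {set T}) : Prop :=
  [/\ uniq vs, (forall x, (x \in vs) = (x \in S)),
      (forall j, j < size vs ->
         minimal_cover (~: (nbhd S :|: S)) (nth set0 (Bparts (nbhd S) vs) j) (X j))
    & S' = S :|: \bigcup_(j < size vs) X j].

End Defs.

(* Main.v *)
Require Import Defs.
From mathcomp Require Import all_boot.
Set Implicit Arguments. Unset Strict Implicit. Unset Printing Implicit Defensive.

Lemma card_bigcup_ord (T : finType) n (F : nat -> {set T}) m :
  (forall j, j < n -> #|F j| <= m) -> #|\bigcup_(j < n) F j| <= n * m.
Proof.
elim: n => [|n IH] H; first by rewrite big_ord0 cards0.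
rewrite big_ord_recr /= mulSn addnC.
apply: leq_trans (leq_card_setU _ _) _.
apply: leq_add; last exact: H.
by apply: IH => j Hj; apply: H; apply: ltnW.
Qed.

Lemma Bparts_adj (T : finType) (e : rel T) (B : {set T}) (vs : seq T) j u x0 :
  j < size vs -> u \in nth set0 (Bparts e B vs) j -> e (nth x0 vs j) u && (u \in B).
Proof.
elim: vs B j => [|v vs IH] B [|j] //=.
  by rewrite inE => _ /andP[-> ->].
move=> Hj Hu; have /andP[-> ] := IH _ _ Hj Hu.
by rewrite inE => /andP[].
Qed.

Lemma ramsey_apply (k l n : nat) (T : finType) (e : rel T) (X : {set T}) :
  symmetric e -> irreflexive e -> ramsey_prop k l n -> n <= #|X| ->
  (exists A : {set T}, A \subset X /\ #|A| = k /\ is_clique e A) \/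
  (exists A : {set T}, A \subset X /\ #|A| = l /\ is_stable e A).
Proof.
move=> Hs Hi Hr Hn.
pose U := {x : T | x \in X}.
pose f : rel U := fun x y => e (val x) (val y).
have Hf1 : symmetric f by move=> x y; exact: Hs.
have Hf2 : irreflexive f by move=> x; exact: Hi.
have HU : n <= #|{: U}| by rewrite card_sig; apply: leq_trans Hn _; rewrite leq_eqVlt; apply/orP; left; apply/eqP; apply: eq_card => x; rewrite !inE.
have sub : forall A : {set U}, (val @: A) \subset X.
  by move=> A; apply/subsetP => x /imsetP[y _ ->]; exact: valP.
case: (Hr U f Hf1 Hf2 HU) => [[A [HA HC]]|[A [HA HC]]]; [left|right];
  exists (val @: A); (split; [exact: sub|]); rewrite card_imset ?HA //; try exact: val_inj;
  split => // x y /imsetP[x' Hx' ->] /imsetP[y' Hy' ->].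
  by move=> Hne; apply: HC => //; apply: contraNneq Hne => ->.
by apply: HC.
Qed.

Lemma k4_lemma (T : finType) (e : rel T) (A : {set T}) (h : T -> T) :
  irreflexive e -> #|A| = 4 -> {in A &, injective h} ->
  (forall x y, x \in A -> y \in A -> x != y -> e (h x) (h y)) ->
  contains_induced (@complete_rel 4) e.
Proof.
move=> Hi HA Hinj Hc.
exists (fun i : 'I_4 => h (enum_val (cast_ord (esym HA) i))); split.
  move=> i j /Hinj H; have /enum_val_inj := H (enum_valP _) (enum_valP _).
  by move/(congr1 val) => /= /val_inj.
move=> i j; rewrite /complete_rel.
case: (eqVneq i j) => [->|Hne]; first by rewrite Hi.
apply/esym/Hc; try exact: enum_valP.
apply: contra Hne => /eqP /enum_val_inj /(congr1 val) /= Hv.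
by apply/eqP/val_inj.
Qed.

Lemma sdk_lemma (T : finType) (e : rel T) (Z W : {set T}) (f : T -> T) (v : T) (s : nat) :
 symmetric e -> irreflexive e -> #|Z| = s ->
 (forall z, z \in Z -> e v z /\ z \notin W) -> v \notin W ->
 (forall z, z \in Z -> f z \in W /\ e z (f z) /\ ~~ e v (f z)) ->
 (forall z y, z \in Z -> y \in Z -> e (f z) y -> y = z) ->
 is_stable e Z -> (forall x y, x \in Z -> y \in Z -> ~~ e (f x) (f y)) ->
 contains_induced (@sdk_rel s) e.
Proof.
move=> Hs Hi HZ Hv vW Hf Hpriv Hst Hst2.
pose z (k : 'I_s) := enum_val (cast_ord (esym HZ) k).
have zZ : forall k, z k \in Z by move=> k; exact: enum_valP.
have zinj : forall k l, z k = z l -> k = l.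
  by move=> k l /enum_val_inj /(congr1 val) /= H; apply: val_inj.
pose g (x : option ('I_s * bool)) :=
  match x with None => v | Some (k, false) => z k | Some (k, true) => f (z k) end.
have vz : forall k, v != z k.
  by move=> k; apply: contraTneq (proj1 (Hv _ (zZ k))) => ->; rewrite Hi.
have vf : forall k, v != f (z k).
  by move=> k; apply: contraNneq vW => ->; exact: (proj1 (Hf _ (zZ k))).
have zf : forall k l, z k != f (z l).
  move=> k l; apply: contraNneq (proj2 (Hv _ (zZ k))) => ->.
  exact: (proj1 (Hf _ (zZ l))).
have finj : forall k l, f (z k) = f (z l) -> k = l.
  move=> k l H; apply: zinj; apply: (Hpriv _ _ (zZ l) (zZ k)).
  by rewrite -H Hs; case: (Hf _ (zZ k)) => _ [].
have ezf : forall k l, e (z k) (f (z l)) = (k == l).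
  move=> k l; case: (eqVneq k l) => [->|Hne]; first by case: (Hf _ (zZ l)) => _ [].
  apply/negP => H; move/eqP: Hne; apply; apply: zinj; apply: (Hpriv _ _ (zZ l) (zZ k)).
  by rewrite Hs.
exists g; split.
  case=> [[k [|]]|] [[l [|]]|] //= H.
  - by move/finj: H => ->.
  - by move: (zf l k); rewrite H eqxx.
  - by move: (vf k); rewrite H eqxx.
  - by move: (zf k l); rewrite H eqxx.
  - by move/zinj: H => ->.
  - by move: (vz k); rewrite H eqxx.
  - by move: (vf l); rewrite H eqxx.
  - by move: (vz l); rewrite H eqxx.
case=> [[k [|]]|] [[l [|]]|] /=.
- by rewrite (negbTE (Hst2 _ _ (zZ k) (zZ l))).
- by rewrite Hs ezf eq_sym.
- by rewrite Hs; case: (Hf _ (zZ k)) => _ [_ /negbTE ->].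
- by rewrite ezf.
- by rewrite (negbTE (Hst _ _ (zZ k) (zZ l))).
- by rewrite Hs (proj1 (Hv _ (zZ k))).
- by case: (Hf _ (zZ l)) => _ [_ /negbTE ->].
- by rewrite (proj1 (Hv _ (zZ l))).
- by rewrite Hi.
Qed.

Lemma key (s R4s R4R4s : nat) (T : finType) (e : rel T) (W Bj X : {set T}) (v : T) :
 symmetric e -> irreflexive e ->
 ~ contains_induced (@sdk_rel s) e -> ~ contains_induced (@complete_rel 4) e ->
 ramsey_prop 4 s R4s -> ramsey_prop 4 R4s R4R4s ->
 minimal_cover e W Bj X -> (forall u, u \in Bj -> e v u /\ u \notin W) -> v \notin W ->
 (forall w, w \in W -> ~~ e v w) ->
 #|X| < R4R4s.
Proof.
move=> Hs Hi Hsdk Hk4 R1 R2 [HXB [Hcov Hmin]] HB vW HvW.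
pose P x w := [&& w \in W, e w x & [forall y in X, e w y ==> (y == x)]].
have priv : forall x, x \in X -> exists w, P x w.
  move=> x xX.
  have Hp : X :\ x \proper X by rewrite properD1.
  case: (boolP [exists w, [&& w \in W, [exists u in Bj, e w u] & ~~ [exists u in X :\ x, e w u]]]).
    case/existsP => w /and3P[wW Hex Hnot]; exists w.
    have Hy : forall y, y \in X -> e w y -> y = x.
      move=> y yX ewy; apply/eqP; apply: contraNT Hnot => Hne.
      by apply/existsP; exists y; rewrite !inE Hne yX.
    case/existsP: (Hcov w wW Hex) => u /andP[uX ewu].
    rewrite /P wW -(Hy u uX ewu) ewu /=.
    apply/forallP => y; apply/implyP => yX; apply/implyP => ewy.
    by rewrite (Hy u uX ewu) (Hy y yX ewy).
  move=> Hn; exfalso; apply: (Hmin _ Hp) => w wW Hex.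
  apply: contraNT Hn => Hne; apply/existsP; exists w; by rewrite wW Hex Hne.
pose f x := odflt x [pick w | P x w].
have Hf : forall x, x \in X -> P x (f x).
  move=> x xX; rewrite /f; case: pickP => [w //|Hn].
  by case: (priv x xX) => w; rewrite Hn.
have fW : forall x, x \in X -> f x \in W by move=> x /Hf /and3P[].
have efx : forall x, x \in X -> e (f x) x by move=> x /Hf /and3P[].
have fpriv : forall x y, x \in X -> y \in X -> e (f x) y -> y = x.
  move=> x y xX yX H; case/and3P: (Hf x xX) => _ _ /forallP /(_ y).
  by rewrite yX H /= => /eqP.
have finj : {in X &, injective f}.
  move=> x y xX yX Hxy; apply: (fpriv y x yX xX); by rewrite -Hxy efx.
rewrite ltnNge; apply/negP => Hle.
case: (ramsey_apply Hs Hi R2 Hle) => [[A [AX [HA HC]]]|[Y [YX [HY HYs]]]].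
  apply: Hk4; apply: (@k4_lemma _ _ A id Hi HA) => //.
pose e' : rel T := fun x y => e (f x) (f y).
have He1 : symmetric e' by move=> x y; exact: Hs.
have He2 : irreflexive e' by move=> x; exact: Hi.
have YX' : forall y, y \in Y -> y \in X by move=> y; apply: (subsetP YX).
case: (ramsey_apply He1 He2 R1 (eq_leq (esym HY))) => [[A [AY [HA HC]]]|[Z [ZY [HZ HZs]]]].
  apply: Hk4; apply: (@k4_lemma _ _ A f Hi HA).
    by move=> x y xA yA; apply: finj; apply: YX'; apply: (subsetP AY).
  by move=> x y xA yA Hne; apply: (HC x y).
have ZX : forall z, z \in Z -> z \in X by move=> z zZ; apply: YX'; apply: (subsetP ZY).
apply: Hsdk; apply: (@sdk_lemma _ e Z W f v s Hs Hi HZ) => //.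
- by move=> z zZ; apply: HB; apply: (subsetP HXB); apply: ZX.
- move=> z zZ; split; first exact: fW (ZX _ zZ).
  by split; [rewrite Hs; apply: efx; apply: ZX | apply: HvW; apply: fW; apply: ZX].
- by move=> z y zZ yZ; apply: fpriv; apply: ZX.
- by move=> x y xZ yZ; apply: HYs; apply: (subsetP ZY).
Qed.

Theorem lemma3p1 (s t : nat) (T : finType) (e : rel T)
  (R4s R4R4s : nat) (a : T)
  (S : nat -> {set T}) (vs : nat -> seq T) (X : nat -> nat -> {set T}) :
  0 < s -> 2 <= t ->
  symmetric e -> irreflexive e ->
  (forall x y, connect e x y) ->
  ~ contains_induced (@path_rel t) e ->
  ~ contains_induced (@sdk_rel s) e ->
  ~ contains_induced (@complete_rel 4) e ->
  is_ramsey_number 4 s R4s ->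
  is_ramsey_number 4 R4s R4R4s ->
  S 1 = [set a] ->
  (forall i, 1 <= i <= t - 2 -> valid_step e (S i) (vs i) (X i) (S i.+1)) ->
  forall i, 1 <= i <= t - 2 ->
    #|S i.+1| <= #|S i| * (1 + R4R4s) /\
    (forall j, j < size (vs i) -> #|X i j| <= R4R4s).
Proof.
move=> s0 t2 Hs Hi _ _ Hsdk Hk4 [R1 _] [R2 _] _ Hstep i Hi'.
case: (Hstep i Hi') => Huniq Hmem Hcov HS.
have Hsize : size (vs i) = #|S i|.
  by rewrite -(card_uniqP Huniq); apply: eq_card => x; rewrite Hmem.
have HX : forall j, j < size (vs i) -> #|X i j| <= R4R4s.
  move=> j Hj; apply: ltnW.
  have vS : nth a (vs i) j \in S i by rewrite -Hmem mem_nth.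
  apply: (@key _ _ _ _ _ _ _ _ (nth a (vs i) j) Hs Hi Hsdk Hk4 R1 R2 (Hcov j Hj)) => [u Hu||w].
  - have /andP[evu uN] := Bparts_adj a Hj Hu.
    by split => //; rewrite !inE negbK; move: uN; rewrite inE => ->.
  - by rewrite !inE vS orbT.
  - rewrite !inE negb_or => /andP[Hn _]; apply: contra Hn => H.
    by apply/existsP; exists (nth a (vs i) j); rewrite vS.
split => //.
rewrite HS; apply: leq_trans (leq_card_setU _ _) _.
rewrite mulnDr muln1 leq_add2l -Hsize.
exact: card_bigcup_ord.
Qed.
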